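(* Let $X$ be an arbitrary set, let $E$ be an equivalence relation on $X$ whose partition into $E$-classes is an $m$-partition $\mathcal{P}=\{X_1,\ldots,X_m\}$ (with $m$ a positive integer), and let $f\in T(X,\mathcal{P})$. Then the following are equivalent: (i) $f\in\Sigma(X,\mathcal{P})$; (ii) $\chi^{(f)}$ is a bijection of $\{1,\ldots,m\}$; (iii) $f$ is $E^*$-preserving; (iv) $f\in S_{\mathcal{P}}(X)$ and $Af^{-1}\neq\emptyset$ for every nonempty open set $A\subseteq X$.
   Context: Maps are written on the right; $Af^{-1}=\{x\mid xf\in A\}$. $T(X,\mathcal{P})=\{f\colon X\to X\mid \forall i\ \exists j:\ X_if\subseteq X_j\}$ and $\Sigma(X,\mathcal{P})=\{f\in T(X,\mathcal{P})\mid Xf\cap X_i\neq\emptyset\ \forall i\}$. For $f\in T(X,\mathcal{P})$, $\chi^{(f)}\colon\{1,\ldots,m\}\to\{1,\ldots,m\}$ is given by $i\chi^{(f)}=j$ whenever $X_if\subseteq X_j$. A map $f$ is $E^*$-preserving if $(x,y)\in E\iff(xf,yf)\in E$ for all $x,y\in X$. The topology on $X$ with $\mathcal{P}$ as a basis has as open sets exactly the unions of blocks; $S_{\mathcal{P}}(X)$ is the set of continuous selfmaps of $X$ for this topology. *)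

(* Defs.v *)
From mathcomp Require Import all_boot.
From Stdlib Require Import ClassicalEpsilon.
Set Implicit Arguments. Unset Strict Implicit. Unset Printing Implicit Defensive.

Section Defs.
Variables (X : Type) (m : nat) (P : 'I_m -> X -> Prop).

Definition is_m_partition : Prop :=
  (forall i, exists x, P i x) /\
  (forall i j x, P i x -> P j x -> i = j) /\
  (forall x, exists i, P i x).

Definition classes_are (E : X -> X -> Prop) : Prop :=
  forall x y, E x y <-> exists i, P i x /\ P i y.

Definition in_T (f : X -> X) : Prop :=
  forall i, exists j, forall x, P i x -> P j (f x).

Definition in_Sigma (f : X -> X) : Prop :=
  in_T f /\ forall i, exists x, P i (f x).

(* chi^(f): i chi = j whenever X_i f ⊆ X_j (chosen by epsilon; unique for f in T) *)
Definition chi (f : X -> X) (i : 'I_m) : 'I_m :=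
  epsilon (inhabits i) (fun j => forall x, P i x -> P j (f x)).

Definition Estar_preserving (E : X -> X -> Prop) (f : X -> X) : Prop :=
  forall x y, E x y <-> E (f x) (f y).

(* open sets of the topology with basis P: exactly the unions of blocks *)
Definition P_open (A : X -> Prop) : Prop :=
  exists S : 'I_m -> Prop, forall x, A x <-> exists i, S i /\ P i x.

Definition P_continuous (f : X -> X) : Prop :=
  forall A, P_open A -> P_open (fun x => A (f x)).

End Defs.

(* Main.v *)
Require Import Defs.
From mathcomp Require Import all_boot.
From Stdlib Require Import ClassicalEpsilon.
Set Implicit Arguments.

Lemma surj_bij_ord (m : nat) (c : 'I_m -> 'I_m) :
  (forall j, exists i, c i = j) -> bijective c.
Proof.
move=> hs.
pose g j := odflt j [pick i | c i == j].
have cg : cancel g c.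
  move=> j; rewrite /g; case: pickP => [i /eqP //|H].
  by case: (hs j) => i ei; move: (H i); rewrite ei eqxx.
have [h gh hg] : bijective g by apply: injF_bij; exact: can_inj cg.
exists g => // i.
by rewrite -{1}(hg i) cg hg.
Qed.

Section S.
Variables (X : Type) (m : nat) (P : 'I_m -> X -> Prop) (E : X -> X -> Prop) (f : X -> X).
Hypothesis hpart : is_m_partition P.
Hypothesis hcl : classes_are P E.
Hypothesis hT : in_T P f.

Lemma chiP i x : P i x -> P (chi P f i) (f x).
Proof.
move=> Hx; have H := epsilon_spec (inhabits i) (fun j => forall x, P i x -> P j (f x)) (hT i).
exact: H.
Qed.

Lemma disj i j x : P i x -> P j x -> i = j.
Proof. by case: hpart => _ [H _]; exact: H. Qed.

Lemma surjE : in_Sigma P f <-> forall j, exists i, chi P f i = j.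
Proof.
split.
  move=> [_ H] j; case: (H j) => x Hx.
  case: hpart => _ [_ cov]; case: (cov x) => i Hi.
  exists i; exact: disj (chiP Hi) Hx.
move=> H; split => // j; case: (H j) => i <-.
case: hpart => [ne _]; case: (ne i) => x Hx; exists x; exact: chiP.
Qed.

Lemma bij_surj : bijective (chi P f) <-> forall j, exists i, chi P f i = j.
Proof.
split; last exact: surj_bij_ord.
by case=> g _ gK j; exists (g j).
Qed.

Lemma bij_Estar : bijective (chi P f) <-> Estar_preserving E f.
Proof.
case: hpart => [ne [_ cov]].
split.
  move=> /bij_inj ci x y; rewrite !hcl; split.
    by case=> i [Hx Hy]; exists (chi P f i); split; apply: chiP.
  case=> k [Hx Hy].
  case: (cov x) => i Hi; case: (cov y) => j Hj.
  have e1 := disj (chiP Hi) Hx; have e2 := disj (chiP Hj) Hy.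
  have eij : i = j by apply: ci; rewrite e1 e2.
  by exists i; split => //; rewrite eij.
move=> He; apply: injF_bij => i j eij.
case: (ne i) => x Hx; case: (ne j) => y Hy.
have : E (f x) (f y) by rewrite hcl; exists (chi P f i); split; [apply: chiP | rewrite eij; apply: chiP].
rewrite -He hcl; case=> k [Hkx Hky].
by rewrite (disj Hx Hkx) (disj Hy Hky).
Qed.

Lemma cont : P_continuous P f.
Proof.
case: hpart => [ne [_ cov]].
move=> A [S HS]; exists (fun i => S (chi P f i)) => x; rewrite HS; split.
  case=> i [Si Hi]; case: (cov x) => k Hk; exists k; split => //.
  by rewrite (disj (chiP Hk) Hi).
case=> i [Si Hi]; exists (chi P f i); split => //; exact: chiP.
Qed.

Lemma openE : (forall A : X -> Prop, P_open P A -> (exists x, A x) -> exists x, A (f x))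
  <-> forall j, exists i, chi P f i = j.
Proof.
case: hpart => [ne [_ cov]].
split.
  move=> H j.
  have op : P_open P (P j) by exists (fun i => i = j) => x; split; [exists j | case=> i [-> ]].
  case: (H _ op (ne j)) => x Hx; case: (cov x) => i Hi.
  by exists i; exact: disj (chiP Hi) Hx.
move=> H A [S HS] [y Ay]; move: Ay; rewrite HS => [[j [Sj Hj]]].
case: (H j) => i ei; case: (ne i) => x Hx; exists x; rewrite HS.
by exists j; split => //; rewrite -ei; exact: chiP.
Qed.

End S.

Theorem corollary3p5 (X : Type) (m : nat) (P : 'I_m -> X -> Prop)
    (E : X -> X -> Prop) (f : X -> X) :
  0 < m ->
  is_m_partition P ->
  classes_are P E ->
  in_T P f ->
  [/\ (in_Sigma P f <-> bijective (chi P f)),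
      (bijective (chi P f) <-> Estar_preserving E f) &
      (Estar_preserving E f <->
        (P_continuous P f /\
         forall A : X -> Prop, P_open P A -> (exists x, A x) ->
           exists x, A (f x)))].
Proof.
move=> _ hp hc hT; split.
- by rewrite (surjE hp hT) (bij_surj P f).
- exact: bij_Estar.
- rewrite -(bij_Estar hp hc hT) (bij_surj P f) -(openE hp hT).
  by split; [move=> H; split => //; exact: cont | case].
Qed.
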